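(* Let $\mathcal{D}=(D,<,\approx)$ with $D$ infinite and $<$ a strict total order, and let $l,r\in\mathbb{N}$. An $(l,r)$-symbolic model $\rho$ admits a model (i.e. is realized by some model $\sigma$) if and only if its local projection $\rho_l$ is realized by some local model and its remote projection $\rho_r$ is realized by some remote model.
   Context: The variable set is $V=V_{\mathrm{local}}\uplus V_{\mathrm{remote}}$, with both parts finite and disjoint. A model is an infinite sequence of maps $V\to D$. A local model is an infinite sequence of maps $V_{\mathrm{local}}\to D$, and a remote model is an infinite sequence of maps $V_{\mathrm{remote}}\to D$. Constraints and their semantics: - $\sigma,n\models \mathbf{X}^i x\approx\mathbf{X}^j y$ iff $\sigma(n+i)(x)=\sigma(n+j)(y)$. - $\sigma,n\models \mathbf{X}^i x<\mathbf{X}^j y$ iff $\sigma(n+i)(x)<\sigma(n+j)(y)$. - $\sigma,n\models\mathbf{X}^i(x\approx\mathbf{XF}y)$ iff there is $k>n+i$ with $\sigma(n+i)(x)=\sigma(k)(y)$. The constraint sets are defined as follows. - $\Omega^l$ is the set of all constraints $\mathbf{X}^ix\approx\mathbf{X}^jy$ and $\mathbf{X}^ix<\mathbf{X}^jy$ with $x,y\in V_{\mathrm{local}}$ and $i,j\in\{0,\dots,l\}$. - $\Omega^r$ is the set of all constraints $\mathbf{X}^ix\approx\mathbf{X}^jy$ and $\mathbf{X}^i(x\approx\mathbf{XF}y)$ with $x,y\in V_{\mathrm{remote}}$ and $i,j\in\{0,\dots,r\}$. An $l$-frame is a set $\{c\in\Omega^l:\sigma_l,0\models c\}$ for some local model $\sigma_l$.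 An $r$-frame is a set $FR\subseteq\Omega^r$ satisfying the following conditions, for all remote variables and all indices in $\{0,\dots,r\}$. 1. $\mathbf{X}^ix\approx\mathbf{X}^ix\in FR$. 2. $\mathbf{X}^ix\approx\mathbf{X}^jy\in FR$ iff $\mathbf{X}^jy\approx\mathbf{X}^ix\in FR$. 3. If $\mathbf{X}^ix\approx\mathbf{X}^jy$ and $\mathbf{X}^jy\approx\mathbf{X}^{j'}z$ are in $FR$, then $\mathbf{X}^ix\approx\mathbf{X}^{j'}z\in FR$. 4. Suppose $\mathbf{X}^ix\approx\mathbf{X}^jy\in FR$. - If $i=j$, then for all $z$: $\mathbf{X}^i(x\approx\mathbf{XF}z)\in FR$ iff $\mathbf{X}^j(y\approx\mathbf{XF}z)\in FR$. - If $i<j$, then $\mathbf{X}^i(x\approx\mathbf{XF}y)\in FR$. Moreover, for all $z$: $\mathbf{X}^i(x\approx\mathbf{XF}z)\in FR$ iff either $\mathbf{X}^j(y\approx\mathbf{XF}z)\in FR$ or $\mathbf{X}^ix\approx\mathbf{X}^{j'}z\in FR$ for some $i<j'\le j$. An $(l,r)$-frame is a set $FR^l\cup FR^r$ with $FR^l$ an $l$-frame and $FR^r$ an $r$-frame. Its local projection is $FR\cap\Omega^l$ and its remote projection is $FR\cap\Omega^r$. One-step consistency is defined as follows. - A pair $(FR_1,FR_2)$ of $l$-frames is one-step consistent if, for all $x,y$ and all $0<i,j\le l$: $\mathbf{X}^ix\approx\mathbf{X}^jy\in FR_1$ iff $\mathbf{X}^{i-1}x\approx\mathbf{X}^{j-1}y\in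 FR_2$, and $\mathbf{X}^ix<\mathbf{X}^jy\in FR_1$ iff $\mathbf{X}^{i-1}x<\mathbf{X}^{j-1}y\in FR_2$. - A pair of $r$-frames is one-step consistent if, for all $x,y$ and all $0<i,j\le r$: $\mathbf{X}^ix\approx\mathbf{X}^jy\in FR_1$ iff $\mathbf{X}^{i-1}x\approx\mathbf{X}^{j-1}y\in FR_2$, and $\mathbf{X}^i(x\approx\mathbf{XF}y)\in FR_1$ iff $\mathbf{X}^{i-1}(x\approx\mathbf{XF}y)\in FR_2$. - A pair of $(l,r)$-frames is one-step consistent if both the pair of local projections and the pair of remote projections are one-step consistent. An $(l,r)$-symbolic model is an infinite sequence $\rho$ of $(l,r)$-frames such that $(\rho(i),\rho(i+1))$ is one-step consistent for every $i$. Its local projection is $\rho_l(i)=\rho(i)\cap\Omega^l$ and its remote projection is $\rho_r(i)=\rho(i)\cap\Omega^r$. Realization is defined as follows. - A model $\sigma$ realizes $\rho$ iff $\rho(i)=\{c\in\Omega^l\cup\Omega^r:\sigma,i\models c\}$ for all $i$. - A local model $\sigma_l$ realizes $\rho_l$ iff $\rho_l(i)=\{c\in\Omega^l:\sigma_l,i\models c\}$ for all $i$. - A remote model $\sigma_r$ realizes $\rho_r$ iff $\rho_r(i)=\{c\in\Omega^r:\sigma_r,i\models c\}$ for all $i$. *)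

(* Defs.v *)
From mathcomp Require Import all_boot.
From Stdlib Require List.

Set Implicit Arguments.
Unset Strict Implicit.
Unset Printing Implicit Defensive.

(* CEq i x j y   :  X^i x ~ X^j y
   CLt i x j y   :  X^i x < X^j y
   CEqF i x y    :  X^i (x ~ XF y) *)
Inductive constr (X : Type) : Type :=
| CEq  of nat & X & nat & X
| CLt  of nat & X & nat & X
| CEqF of nat & X & X.

Arguments CEq {X}.
Arguments CLt {X}.
Arguments CEqF {X}.

Definition cmap (X Y : Type) (f : X -> Y) (c : constr X) : constr Y :=
  match c with
  | CEq i x j y => CEq i (f x) j (f y)
  | CLt i x j y => CLt i (f x) j (f y)
  | CEqF i x y => CEqF i (f x) (f y)
  end.

(* A (generic) model: an infinite sequence of valuations X -> D.
   The data equality ~ is equality on D. *)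
Definition sat (D : Type) (lt : D -> D -> Prop) (X : Type)
  (sigma : nat -> X -> D) (n : nat) (c : constr X) : Prop :=
  match c with
  | CEq i x j y => sigma (n + i) x = sigma (n + j) y
  | CLt i x j y => lt (sigma (n + i) x) (sigma (n + j) y)
  | CEqF i x y => exists k, n + i < k /\ sigma (n + i) x = sigma k y
  end.

(* Shapes of constraints allowed in Omega^l (resp. Omega^r), over the
   local (resp. remote) variables only. *)
Definition local_shape (X : Type) (l : nat) (c : constr X) : Prop :=
  match c with
  | CEq i _ j _ => i <= l /\ j <= l
  | CLt i _ j _ => i <= l /\ j <= l
  | CEqF _ _ _ => False
  end.

Definition remote_shape (X : Type) (r : nat) (c : constr X) : Prop :=
  match c with
  | CEq i _ j _ => i <= r /\ j <= r
  | CLt _ _ _ _ => False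
  | CEqF i _ _ => i <= r
  end.

Section Symb.
Variables (D : Type) (lt : D -> D -> Prop) (VL VR : finType).

Definition V : Type := (VL + VR)%type.

Definition cset := constr V -> Prop.

Definition Omega_l (l : nat) (c : constr V) : Prop :=
  exists c' : constr VL, c = cmap inl c' /\ local_shape l c'.

Definition Omega_r (r : nat) (c : constr V) : Prop :=
  exists c' : constr VR, c = cmap inr c' /\ remote_shape r c'.

Definition lframe (l : nat) (FR : cset) : Prop :=
  exists sigma_l : nat -> VL -> D,
    forall c, FR c <->
      exists c', c = cmap inl c' /\ local_shape l c' /\ sat lt sigma_l 0 c'.

Definition rframe (r : nat) (FR : cset) : Prop :=
  let EQ i x j y := FR (CEq i (@inr VL VR x) j (inr y)) in
  let EQF i x y := FR (CEqF i (@inr VL VR x) (inr y)) in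
  (forall c, FR c -> Omega_r r c) /\
  (forall x i, i <= r -> EQ i x i x) /\
  (forall x y i j, i <= r -> j <= r -> (EQ i x j y <-> EQ j y i x)) /\
  (forall x y z i j j', i <= r -> j <= r -> j' <= r ->
     EQ i x j y -> EQ j y j' z -> EQ i x j' z) /\
  (forall x y i j, i <= r -> j <= r -> EQ i x j y ->
     (i = j -> forall z, EQF i x z <-> EQF j y z) /\
     (i < j ->
        EQF i x y /\
        (forall z, EQF i x z <->
           (EQF j y z \/ exists j', i < j' <= j /\ EQ i x j' z)))).

Definition lrframe (l r : nat) (FR : cset) : Prop :=
  exists FRl FRr, lframe l FRl /\ rframe r FRr /\
    forall c, FR c <-> (FRl c \/ FRr c).

Definition proj_l (l : nat) (FR : cset) : cset := fun c => FR c /\ Omega_l l c.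
Definition proj_r (r : nat) (FR : cset) : cset := fun c => FR c /\ Omega_r r c.

Definition osc_l (l : nat) (FR1 FR2 : cset) : Prop :=
  forall (x y : VL) i j, 0 < i <= l -> 0 < j <= l ->
    (FR1 (CEq i (@inl VL VR x) j (inl y)) <->
       FR2 (CEq i.-1 (@inl VL VR x) j.-1 (inl y))) /\
    (FR1 (CLt i (@inl VL VR x) j (inl y)) <->
       FR2 (CLt i.-1 (@inl VL VR x) j.-1 (inl y))).

Definition osc_r (r : nat) (FR1 FR2 : cset) : Prop :=
  forall (x y : VR) i j, 0 < i <= r -> 0 < j <= r ->
    (FR1 (CEq i (@inr VL VR x) j (inr y)) <->
       FR2 (CEq i.-1 (@inr VL VR x) j.-1 (inr y))) /\
    (FR1 (CEqF i (@inr VL VR x) (inr y)) <->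
       FR2 (CEqF i.-1 (@inr VL VR x) (inr y))).

Definition osc_lr (l r : nat) (FR1 FR2 : cset) : Prop :=
  osc_l l (proj_l l FR1) (proj_l l FR2) /\
  osc_r r (proj_r r FR1) (proj_r r FR2).

Definition symbolic_model (l r : nat) (rho : nat -> cset) : Prop :=
  (forall n, lrframe l r (rho n)) /\
  (forall n, osc_lr l r (rho n) (rho n.+1)).

Definition realizes (l r : nat) (sigma : nat -> V -> D) (rho : nat -> cset) :=
  forall n c, rho n c <-> ((Omega_l l c \/ Omega_r r c) /\ sat lt sigma n c).

Definition realizes_l (l : nat) (sigma_l : nat -> VL -> D) (rho : nat -> cset) :=
  forall n c, proj_l l (rho n) c <->
    exists c', c = cmap inl c' /\ local_shape l c' /\ sat lt sigma_l n c'.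

Definition realizes_r (r : nat) (sigma_r : nat -> VR -> D) (rho : nat -> cset) :=
  forall n c, proj_r r (rho n) c <->
    exists c', c = cmap inr c' /\ remote_shape r c' /\ sat lt sigma_r n c'.

End Symb.

Definition strict_total_order (D : Type) (lt : D -> D -> Prop) : Prop :=
  (forall x, ~ lt x x) /\
  (forall x y z, lt x y -> lt y z -> lt x z) /\
  (forall x y, lt x y \/ x = y \/ lt y x).

Definition infinite_type (D : Type) : Prop :=
  forall s : list D, exists d, ~ List.In d s.

(* Main.v *)
Require Import Defs.
From mathcomp Require Import all_boot.

Lemma sat_inl (D : Type) (lt : D -> D -> Prop) (VL VR : finType)
  (s : nat -> V VL VR -> D) n (c : constr VL) :
  sat lt s n (cmap inl c) <-> sat lt (fun m x => s m (inl x)) n c.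
Proof. by case: c. Qed.

Lemma sat_inr (D : Type) (lt : D -> D -> Prop) (VL VR : finType)
  (s : nat -> V VL VR -> D) n (c : constr VR) :
  sat lt s n (cmap inr c) <-> sat lt (fun m x => s m (inr x)) n c.
Proof. by case: c. Qed.

Theorem lemma2p1p1 (D : Type) (lt : D -> D -> Prop)
  (Hord : strict_total_order lt) (Hinf : infinite_type D)
  (VL VR : finType) (l r : nat) (rho : nat -> cset VL VR)
  (Hrho : symbolic_model lt l r rho) :
  (exists sigma : nat -> V VL VR -> D, realizes lt l r sigma rho) <->
  ((exists sigma_l : nat -> VL -> D, realizes_l lt l sigma_l rho) /\
   (exists sigma_r : nat -> VR -> D, realizes_r lt r sigma_r rho)).
Proof.
have HO : forall n c, rho n c -> Omega_l l c \/ Omega_r r c.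
  move=> n c Hc; case: Hrho => Hf _; case: (Hf n) => FRl [FRr [[sl Hl] [[Hr _] Heq]]].
  case/Heq: Hc => [/Hl [c' [-> [Hs _]]]|/Hr Hc]; [left; by exists c'|by right].
split.
- move=> [s Hs]; split.
  + exists (fun m x => s m (inl x)) => n c; split.
    * move=> [/Hs [_ Hsat] [c' [Ec Hsh]]]; exists c'; split=> //; split=> //.
      by apply/sat_inl; rewrite -Ec.
    * move=> [c' [Ec [Hsh Hsat]]].
      have Ho : Omega_l l c by exists c'.
      split=> //; apply/Hs; split; first by left.
      by rewrite Ec; apply/sat_inl.
  + exists (fun m x => s m (inr x)) => n c; split.
    * move=> [/Hs [_ Hsat] [c' [Ec Hsh]]]; exists c'; split=> //; split=> //.
      by apply/sat_inr; rewrite -Ec.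
    * move=> [c' [Ec [Hsh Hsat]]].
      have Ho : Omega_r r c by exists c'.
      split=> //; apply/Hs; split; first by right.
      by rewrite Ec; apply/sat_inr.
- move=> [[sl Hl] [sr Hr]].
  exists (fun m v => match v with inl x => sl m x | inr y => sr m y end) => n c.
  split.
  + move=> Hc; split; first exact: HO Hc.
    case: (HO _ _ Hc) => Ho.
    * have [c' [Ec [_ Hsat]]] := (proj1 (Hl n c) (conj Hc Ho)).
      by rewrite Ec; apply/sat_inl.
    * have [c' [Ec [_ Hsat]]] := (proj1 (Hr n c) (conj Hc Ho)).
      by rewrite Ec; apply/sat_inr.
  + move=> [[[c' [Ec Hsh]]|[c' [Ec Hsh]]] Hsat].
    * suff : proj_l l (rho n) c by case.
      apply/Hl; exists c'; split=> //; split=> //.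
      by move: Hsat; rewrite Ec => /sat_inl.
    * suff : proj_r r (rho n) c by case.
      apply/Hr; exists c'; split=> //; split=> //.
      by move: Hsat; rewrite Ec => /sat_inr.
Qed.
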